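(* Let $\mathcal{C}=(\mathcal{N},\Omega,P)$ satisfy exchangeability (if state $\omega'$ permutes $\omega$ then $P(\omega')=P(\omega)$) and the information assumption: (a) if $s_i=s^0$ then $P(v,s)=P(v,s_{-i})P(s_i)$, and (b) if $s_i\neq s^0$ then $V_i^d(s)>0$ if and only if $V_i^d(s_i)>0$. Then, for any state $\omega=(v,s)\in\Omega$, $P(\omega)=\lambda^{M(s)}(1-\lambda)^{n-M(s)}\sum_{s'\in C(s)}P_{\mathcal{I}}(v,s')$. Moreover, if $\sigma\in\Sigma^*$, then in each term of $\Pi_i(\mathcal{C},\sigma)=\sum_{g=0}^{\tau}\sum_{m=g}^{\tau+g}p_i(\sigma\mid g,m)P(M=m\mid S_i=s^0)Z(g,m)$, $P(M=m\mid S_i=s^0)$ depends only on $\lambda$, $p_i(\sigma\mid g,m)$ depends only on $\sigma$, and $Z(g,m)$ depends only on $P_{\mathcal{I}}$.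
   Context: $n$ voters (odd), $\tau=\frac{n-1}{2}$, two policies $p^*,p_*$ chosen by simple majority; finite state space $\Omega=\mathcal{V}^n\times\mathcal{S}^n$ with signal set $\mathcal{S}=\{s^0,\dots,s^K\}$, informative signals $\mathcal{M}=\{s^1,\dots,s^K\}$; $V_i^d=V_i^{p^*}-V_i^{p_*}$ and $V_i^d(E)$ its conditional expectation given event $E$. $\lambda=P(S_i\in\mathcal{M})$; $P_{\mathcal{I}}(\cdot)=P(\cdot\mid S\in\mathcal{M}^n)$; $M(s)$ is the number of voters with informative signals; $I(s)$ the set of such voters; $C(s)=\{s'\in\mathcal{M}^n: s'_i=s_i\ \forall i\in I(s)\}$. $\Sigma^*$ is the set of strategy profiles in which voters with good news (signals $s^k$ with $V_i^d(S_i=s^k)>0$) vote $p^*$ and voters with bad news vote $p_*$; $\sigma_i$ is voter $i$'s probability of voting $p^*$ on $s^0$. $\Pi_i(\mathcal{C},\sigma)$ is the expected payoff difference between voting $p^*$ and $p_*$ for voter $i$ with signal $s^0$; $p_i(\sigma\mid g,m)$ is the probability that exactly $\tau$ of the other voters vote $p^*$ given $G=g$ others with good news, $M=m$ others informed, and $S_i=s^0$; $Z(g,m)=P(G=g\mid M=m)V_i^d(G=g,M=m,S_i=s^0)$. *)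

(* Defs.v *)
From HB Require Import structures.
From mathcomp Require Import all_boot all_order all_fingroup all_algebra.
Set Implicit Arguments. Unset Strict Implicit. Unset Printing Implicit Defensive.
Import Order.TTheory GRing.Theory Num.Theory.
Local Open Scope ring_scope.

Section Voting.
Variable R : realFieldType.
(* n = 2 tau + 1 voters (n odd, tau = (n-1)/2) *)
Variable tau : nat.
(* Vt = the finite valuation set V; signals S = {s^0,...,s^K} = 'I_K.+1, s^0 = ord0 *)
Variables (Vt : finType) (K : nat).
(* Vd x = V^{p*} - V^{p_*} for a voter whose valuation is x *)
Variable Vd : Vt -> R.

Local Notation nv := (tau.*2.+1).
Local Notation voter := 'I_nv.
Local Notation Sig := 'I_K.+1.
Local Notation s0 := (ord0 : Sig).
Local Notation sigs := {ffun voter -> Sig}.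
Local Notation Omega := ({ffun voter -> Vt} * {ffun voter -> Sig})%type.

Definition Pr (P : Omega -> R) (E : pred Omega) : R := \sum_(w : Omega | E w) P w.
Definition condE (P : Omega -> R) (X : Omega -> R) (E : pred Omega) : R :=
  (\sum_(w : Omega | E w) P w * X w) / Pr P E.

Definition Vdi (i : voter) (w : Omega) : R := Vd (w.1 i).

Definition exchangeable (P : Omega -> R) : Prop :=
  forall (pi : {perm 'I_nv}) (w : Omega),
    P ([ffun j => w.1 (pi j)], [ffun j => w.2 (pi j)]) = P w.

Definition info_a (P : Omega -> R) : Prop :=
  forall (i : voter) (w : Omega), w.2 i = s0 ->
    P w = Pr P [pred w' : Omega | (w'.1 == w.1) &&
                   [forall j, (j != i) ==> (w'.2 j == w.2 j)]]
          * Pr P [pred w' : Omega | w'.2 i == s0].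

(* information assumption (b): if s_i <> s^0 then V_i^d(s) > 0 iff V_i^d(s_i) > 0
   (for signal profiles s of positive probability, where V_i^d(s) is defined) *)
Definition info_b (P : Omega -> R) : Prop :=
  forall (i : voter) (s : sigs), s i != s0 ->
    0 < Pr P [pred w : Omega | w.2 == s] ->
    (0 < condE P (Vdi i) [pred w : Omega | w.2 == s] <->
     0 < condE P (Vdi i) [pred w : Omega | w.2 i == s i]).

Definition model (P : Omega -> R) : Prop :=
  [/\ forall w, 0 <= P w, \sum_(w : Omega) P w = 1,
      exchangeable P, info_a P & info_b P].

(* lambda = P(S_i in M) (computed at voter 0; independent of i by exchangeability) *)
Definition lambda (P : Omega -> R) : R := Pr P [pred w : Omega | w.2 ord0 != s0].

Definition informed (s : sigs) : {set voter} := [set j | s j != s0].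
Definition nM (s : sigs) : nat := #|informed s|.

Definition allinf : pred Omega := [pred w : Omega | [forall j, w.2 j != s0]].
Definition PI (P : Omega -> R) (w : Omega) : R :=
  if allinf w then P w / Pr P allinf else 0.

Definition Cset (s : sigs) : pred sigs :=
  [pred s' : sigs | [forall j, s' j != s0] &&
                    [forall j, (j \in informed s) ==> (s' j == s j)]].

Definition good (P : Omega -> R) (j : voter) (k : Sig) : bool :=
  (k != s0) && (0 < condE P (Vdi j) [pred w : Omega | w.2 j == k]).

Definition Gcnt (P : Omega -> R) (i : voter) (w : Omega) : nat :=
  #|[set j | (j != i) && good P j (w.2 j)]|.
Definition Mcnt (i : voter) (w : Omega) : nat :=
  #|[set j | (j != i) && (w.2 j != s0)]|.
Definition unin_others (i : voter) (w : Omega) : {set voter} :=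
  [set j | (j != i) && (w.2 j == s0)].

(* profiles in Sigma^*: determined by sigma_j in [0,1], the probability that
   voter j votes p* on signal s^0 (good news -> p*, bad news -> p_* ) *)
Definition sigma_star (sigma : voter -> R) : Prop :=
  forall j, 0 <= sigma j <= 1.

(* probability, in state w, that exactly tau of the other voters vote p*
   under the profile of Sigma^* given by sigma (good-news voters vote p*,
   bad-news voters vote p_*, uninformed voters j vote p* w.p. sigma_j,
   independently) *)
Definition pivprob (P : Omega -> R) (sigma : voter -> R) (i : voter)
    (w : Omega) : R :=
  \sum_(A : {set voter} | (A \subset unin_others i w) &&
                          (Gcnt P i w + #|A| == tau)%N)
    ((\prod_(j in A) sigma j) * \prod_(j in unin_others i w :\: A) (1 - sigma j)).

Definition Si0 (i : voter) : pred Omega := [pred w : Omega | w.2 i == s0].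

Definition Ev (P : Omega -> R) (i : voter) (g m : nat) : pred Omega :=
  [pred w : Omega | (Gcnt P i w == g) && (Mcnt i w == m) && (w.2 i == s0)].

Definition p_piv (P : Omega -> R) (sigma : voter -> R) (i : voter) (g m : nat) : R :=
  (\sum_(w : Omega | Ev P i g m w) P w * pivprob P sigma i w) / Pr P (Ev P i g m).

Definition probM (P : Omega -> R) (i : voter) (m : nat) : R :=
  Pr P [pred w : Omega | (Mcnt i w == m) && (w.2 i == s0)]
  / Pr P (Si0 i).

Definition Zf (P : Omega -> R) (i : voter) (g m : nat) : R :=
  Pr P [pred w : Omega | (Gcnt P i w == g) && (Mcnt i w == m)]
  / Pr P [pred w : Omega | Mcnt i w == m]
  * condE P (Vdi i) (Ev P i g m).

End Voting.

(* Main.v *)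
Require Import Defs.
From HB Require Import structures.
From mathcomp Require Import all_boot all_order all_fingroup all_algebra.
From mathcomp Require Import ring lra.
From Stdlib Require Import FunctionalExtensionality.
Set Implicit Arguments. Unset Strict Implicit. Unset Printing Implicit Defensive.
Import Order.TTheory GRing.Theory Num.Theory.
Local Open Scope ring_scope.

Section Proofs.
Variable R : realFieldType.
Variable tau : nat.
Variables (Vt : finType) (K : nat).
Variable Vd : Vt -> R.

Local Notation nv := (tau.*2.+1).
Local Notation voter := 'I_nv.
Local Notation Sig := 'I_K.+1.
Local Notation s0 := (ord0 : Sig).
Local Notation sigs := {ffun voter -> Sig}.
Local Notation Omega := ({ffun voter -> Vt} * {ffun voter -> Sig})%type.

Local Notation AI := (@allinf tau Vt K).
Implicit Types (P : Omega -> R) (w : Omega) (s : sigs) (I : {set voter}).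

Lemma PrE P (E : pred Omega) : Pr P E = \sum_w P w * (E w)%:R.
Proof.
rewrite /Pr big_mkcond; apply: eq_bigr => w _.
by case: (E w); rewrite ?mulr1 ?mulr0.
Qed.

Definition pw (pi : {perm voter}) w : Omega :=
  ([ffun j => w.1 (pi j)], [ffun j => w.2 (pi j)]).

Lemma pw_inj pi : injective (pw pi).
Proof.
move=> [a b] [c d] /= [] /ffunP E1 /ffunP E2; congr pair; apply/ffunP => j.
  by have := E1 ((pi^-1)%g j); rewrite !ffunE permKV.
by have := E2 ((pi^-1)%g j); rewrite !ffunE permKV.
Qed.

Lemma exch_sum P pi (F : Omega -> R) : exchangeable P ->
  \sum_w P w * F w = \sum_w P w * F (pw pi w).
Proof.
move=> Ex; rewrite (reindex_inj (@pw_inj pi)); apply: eq_bigr => w _.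
by rewrite /pw Ex.
Qed.

Lemma sum_pair (F : Omega -> R) : \sum_w F w = \sum_v \sum_s F (v, s).
Proof. by rewrite pair_bigA; apply: eq_bigr => -[]. Qed.

Definition wt (l : R) I : R := \prod_j (if j \in I then l else 1 - l).

Lemma wtE l I : wt l I = l ^+ #|I| * (1 - l) ^+ (nv - #|I|).
Proof.
rewrite /wt (bigID (mem I)) /=.
have -> : \prod_(j | j \in I) (if j \in I then l else 1 - l) = \prod_(j in I) l.
  by apply: eq_bigr => j ->.
have -> : \prod_(j | j \notin I) (if j \in I then l else 1 - l) = \prod_(j in [pred j | j \notin I]) (1 - l).
  by apply: eq_bigr => j Hj; rewrite (negbTE Hj).
rewrite !prodr_const; congr (_ * _ ^+ _).
have -> : #|[pred j | j \notin I]| = #|~: I| by apply: eq_card => j; rewrite !inE.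
have := cardsC I; rewrite card_ord; move: #|I| #|~: I| => a b <-; by rewrite addKn.
Qed.

Lemma sum_wt l : \sum_I wt l I = 1.
Proof.
have := @bigA_distr R 0 1 *%R +%R voter (fun _ : voter => l) (fun _ => 1 - l).
rewrite /wt => H; rewrite -[LHS]H.
rewrite (eq_bigr (fun=> 1)); last by move=> * /=; rewrite addrCA subrr addr0.
by rewrite big1.
Qed.


Definition upd s (i : voter) (k : Sig) : sigs := [ffun j => if j == i then k else s j].
Definition rst s I : sigs := [ffun j => if j \in I then s j else s0].


Lemma Cset_upd s i k s' : s i = s0 -> k != s0 ->
  (Cset s s' && (s' i == k)) = Cset (upd s i k) s'.
Proof.
move=> si nk; rewrite /Cset /=; apply/idP/idP.
  case/andP=> /andP[A /forallP B] /eqP ski; rewrite A /=.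
  apply/forallP => j; rewrite !inE !ffunE; case: (eqVneq j i) => [->|nji]; first by rewrite ski eqxx implybT.
  by have := B j; rewrite inE.
case/andP=> A /forallP B; rewrite A /=.
have := B i; rewrite !inE !ffunE eqxx nk /= => ->; rewrite andbT.
apply/forallP => j; rewrite inE; have := B j; rewrite !inE !ffunE.
by case: (eqVneq j i) => [->|//]; rewrite si eqxx.
Qed.

Lemma Cset_part s i (F : sigs -> R) : s i = s0 ->
  \sum_(s' | Cset s s') F s' = \sum_(k | k != s0) \sum_(s' | Cset (upd s i k) s') F s'.
Proof.
move=> si; rewrite (partition_big (fun s' : sigs => s' i) (fun k => k != s0)).
  by apply: eq_bigr => k nk; apply: eq_bigl => s'; rewrite Cset_upd.
by move=> s' /andP[/forallP A _]; apply: A.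
Qed.

Lemma inf_upd s i k : s i = s0 -> k != s0 ->
  ~: informed (upd s i k) = (~: informed s) :\ i.
Proof.
move=> si nk; apply/setP => j; rewrite !inE !ffunE.
by case: (eqVneq j i) => [->|_]; rewrite ?nk ?si ?eqxx.
Qed.

Lemma Cset_full s : #|~: informed s| = 0%N -> forall s', Cset s s' = (s' == s).
Proof.
move=> /cards0_eq E s'.
have H j : s j != s0.
  apply/negP => /eqP sj; have : j \in ~: informed s by rewrite !inE sj eqxx.
  by rewrite E inE.
rewrite /Cset /=; apply/idP/idP.
  case/andP=> _ /forallP B; apply/eqP/ffunP => j.
  by have := B j; rewrite inE H => /eqP.
move/eqP ->; apply/andP; split; apply/forallP => j; first exact: H.
by rewrite eqxx implybT.
Qed.



Lemma informed_rst s' I : [forall j, s' j != s0] -> informed (rst s' I) = I.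
Proof.
move=> /forallP A; apply/setP => j; rewrite !inE ffunE.
by case: (boolP (j \in I)) => _; rewrite ?A ?eqxx.
Qed.

Lemma sum_Cset s' (H : sigs -> R) : [forall j, s' j != s0] ->
  \sum_(s | Cset s s') H s = \sum_I H (rst s' I).
Proof.
move=> A; rewrite (reindex_onto (rst s') (@informed tau K)).
  apply: eq_bigl => I; rewrite informed_rst // eqxx andbT /Cset /= A /=.
  by apply/forallP => j; rewrite informed_rst // ffunE; apply/implyP => ->.
move=> s /andP[_ /forallP B]; apply/ffunP => j; rewrite ffunE.
have := B j; rewrite inE; case: (boolP (s j != s0)) => /= [_ /eqP //|].
by rewrite negbK => /eqP ->.
Qed.

Lemma swapC (G X : sigs -> R) :
  \sum_s G s * \sum_(s' | Cset s s') X s' = \sum_s' X s' * \sum_(s | Cset s s') G s.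
Proof.
under eq_bigr do rewrite mulr_sumr big_mkcond.
rewrite exchange_big; apply: eq_bigr => s' _; rewrite mulr_sumr [RHS]big_mkcond /=.
by apply: eq_bigr => s _; case: (Cset s s') => //; rewrite mulrC.
Qed.

Lemma Cset_allinf s s' : Cset s s' -> [forall j, s' j != s0].
Proof. by case/andP. Qed.

Lemma sum_Cset_wt l s' : \sum_(s | Cset s s') wt l (informed s) = ([forall j, s' j != s0])%:R.
Proof.
case: (boolP [forall j, s' j != s0]) => A.
  by rewrite sum_Cset //; under eq_bigr do rewrite informed_rst //; rewrite sum_wt.
by rewrite big_pred0 // => s; apply/negP => /Cset_allinf; apply/negP.
Qed.

Lemma card_inf s : (#|informed s| + #|~: informed s|)%N = nv.
Proof. by rewrite cardsC card_ord. Qed.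

Lemma nv_sub s : (nv - #|informed s| = #|~: informed s|)%N.
Proof. by have := card_inf s; move: #|informed s| #|~: informed s| => a b <-; rewrite addKn. Qed.

Lemma exp_split (l : R) s : l ^+ nv = l ^+ #|informed s| * l ^+ #|~: informed s|.
Proof. by rewrite -exprD card_inf. Qed.

Lemma rst_eq_s0 s' I j : [forall j, s' j != s0] -> (rst s' I j == s0) = (j \notin I).
Proof. by move=> /forallP A; rewrite ffunE; case: (j \in I); rewrite ?eqxx // (negbTE (A j)). Qed.

Lemma Mcnt_rst i (v : {ffun voter -> Vt}) s' I : [forall j, s' j != s0] -> Mcnt i (v, rst s' I) = #|I :\ i|.
Proof.
move=> A; apply: eq_card => j; rewrite !inE /= rst_eq_s0 // negbK.
by rewrite andbC.
Qed.

Lemma swap_trans (T : finType) (i : T) (Q : {set T} -> R) :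
  (forall a b (A : {set T}), a != i -> b != i -> Q A = Q (tperm a b @^-1: A)) ->
  forall A B : {set T}, i \notin A -> i \notin B -> #|A| = #|B| -> Q A = Q B.
Proof.
move=> H A B; move Hk: #|A :\: B| => k; elim: k A Hk => [|k IH] A Hk iA iB cAB.
  have sAB : A \subset B by rewrite -setD_eq0 -cards_eq0 Hk.
  by have /eqP -> : A == B by rewrite eqEcard sAB cAB leqnn.
have [a Ha] : exists a, a \in A :\: B by apply/set0Pn; rewrite -card_gt0 Hk.
have cBA : #|B :\: A| = k.+1.
  have E1 := cardsID B A; have E2 := cardsID A B; rewrite setIC in E2.
  by move: E1 E2; rewrite cAB Hk => <- /eqP; rewrite eqn_add2l => /eqP.
have [b Hb] : exists b, b \in B :\: A by apply/set0Pn; rewrite -card_gt0 cBA.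
move: (Ha) (Hb); rewrite !inE => /andP[aB aA] /andP[bA bB].
have ai : a != i by apply: contraNneq iA => <-.
have bi : b != i by apply: contraNneq iB => <-.
rewrite (H a b A ai bi); apply: IH => //.
- have -> : tperm a b @^-1: A :\: B = (A :\: B) :\ a.
    apply/setP => x; rewrite !inE.
    case: tpermP => [->|->|xa xb]; rewrite ?eqxx ?(negbTE bA) ?(negbTE aB) ?bB ?andbF //.
    by move/eqP/negbTE: xa => ->.
  by have := cardsD1 a (A :\: B); rewrite Ha Hk add1n => -[].
- by rewrite inE tpermD // eq_sym.
- by rewrite card_preimset // => x y; apply: perm_inj.
Qed.

Lemma card_Uo i w : (#|unin_others i w| + Mcnt i w = tau.*2)%N.
Proof.
have := cardsID [set j | w.2 j == s0] [set~ i]; rewrite cardsC1 card_ord /= => E; apply: (etrans _ E).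
by congr (_ + _); apply: eq_card => j; rewrite !inE // andbC.
Qed.

Lemma card_Uo_m i w m : Mcnt i w = m -> #|unin_others i w| = (tau.*2 - m)%N.
Proof. by move=> Mm; have := card_Uo i w; rewrite Mm; move: #|unin_others i w| => a E; rewrite -E addnK. Qed.

Definition cls i m (A : {set voter}) := (i \notin A) && (#|A| == tau.*2 - m)%N.

Definition fpiv (sigma : voter -> R) (g : nat) (U : {set voter}) : R :=
  \sum_(A : {set voter} | (A \subset U) && (g + #|A| == tau)%N)
    ((\prod_(j in A) sigma j) * \prod_(j in U :\: A) (1 - sigma j)).

Lemma sum_cls i m (F : {set voter} -> R) q :
  \sum_A F A * ((cls i m A)%:R * q) = q * \sum_(A | cls i m A) F A.
Proof.
rewrite [in RHS]big_mkcond mulr_sumr; apply: eq_bigr => A _.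
by case: (cls i m A); rewrite ?mul1r ?mul0r ?mulr0 // mulrC.
Qed.

Lemma split_i (i : voter) (h : {set voter} -> R) :
  \sum_(I : {set voter}) h I = \sum_(I : {set voter} | i \notin I) (h I + h (i |: I)).
Proof.
rewrite (bigID (fun I : {set voter} => i \in I)) /= addrC big_split /=; congr (_ + _).
rewrite (reindex_onto (fun I : {set voter} => i |: I) (fun I : {set voter} => I :\ i)); last by move=> I; apply: setD1K.
apply: eq_bigl => I; rewrite setU11 /=; apply/eqP/idP => [<-|iI]; last exact: setU1K.
by rewrite !inE eqxx.
Qed.

Lemma setD1_notin I (i : voter) : i \notin I -> I :\ i = I.
Proof. by move=> iI; apply/setP => j; rewrite !inE; case: eqVneq => // ->; rewrite (negbTE iI). Qed.

Definition wtm (l : R) k := l ^+ k * (1 - l) ^+ (nv - k).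

Lemma cnt1 l (i : voter) (m : nat) (X : {set voter} -> R) :
  \sum_I wt l I * ((#|I :\ i| == m)%:R * X (I :\ i)) =
  (wtm l m + wtm l m.+1) * \sum_(I : {set voter} | (i \notin I) && (#|I| == m)) X I.
Proof.
rewrite (split_i i) big_mkcondr mulr_sumr; apply: eq_bigr => I iI.
rewrite setU1K // setD1_notin // !wtE cardsU1 iI add1n.
case: (eqVneq #|I| m) => [->|ne]; last by rewrite !mul0r !mulr0 addr0.
by rewrite /wtm !mul1r mulrDl.
Qed.

Lemma cnt2 l (i : voter) (m : nat) (X : {set voter} -> R) :
  \sum_I wt l I * ((i \notin I)%:R * ((#|I :\ i| == m)%:R * X (I :\ i))) =
  wtm l m * \sum_(I : {set voter} | (i \notin I) && (#|I| == m)) X I.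
Proof.
rewrite (split_i i) big_mkcondr mulr_sumr; apply: eq_bigr => I iI.
rewrite setU11 /= mul0r mulr0 addr0 iI mul1r setD1_notin // !wtE.
case: (eqVneq #|I| m) => [->|ne]; last by rewrite !mul0r !mulr0.
by rewrite /wtm !mul1r.
Qed.

Lemma wt_ge0 l I : 0 <= l <= 1 -> 0 <= wt l I.
Proof.
case/andP=> l0 l1; apply: prodr_ge0 => j _; case: (j \in I) => //.
by rewrite subr_ge0.
Qed.

Lemma wtm_gt0 l k : 0 < l < 1 -> 0 < wtm l k.
Proof.
case/andP=> l0 l1; apply: mulr_gt0; apply: exprn_gt0 => //.
by rewrite subr_gt0.
Qed.

Lemma ratio_cancel (c a b : R) : c != 0 -> (c * a) / (c * b) = a / b.
Proof. by move=> c0; rewrite invfM mulrACA mulfV // mul1r. Qed.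

Lemma rst_k s' I j k : k != s0 -> (rst s' I j == k)%:R = (j \in I)%:R * (s' j == k)%:R :> R.
Proof.
move=> nk; rewrite ffunE; case: (j \in I); rewrite ?mul1r ?mul0r //.
by rewrite eq_sym (negbTE nk).
Qed.

Definition Gs (gd : voter -> Sig -> bool) (J : {set voter}) (s' : sigs) : nat :=
  #|[set j in J | gd j (s' j)]|.

Definition SI (pi : Omega -> R) (i : voter) (m : nat) (X : Omega -> {set voter} -> R) : R :=
  \sum_w pi w * \sum_(I : {set voter} | (i \notin I) && (#|I| == m)) X w I.

Definition Zval (pi : Omega -> R) (gd : voter -> Sig -> bool) i g m : R :=
  SI pi i m (fun w I => (Gs gd I w.2 == g)%:R) / SI pi i m (fun _ _ => 1) *
  (SI pi i m (fun w I => (Gs gd I w.2 == g)%:R * Vd (w.1 i)) /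
   SI pi i m (fun w I => (Gs gd I w.2 == g)%:R)).

Lemma natr_and (a b : bool) : (a && b)%:R = a%:R * b%:R :> R.
Proof. by case: a; case: b; rewrite ?mul1r ?mul0r. Qed.

Section Model.
Variable P : Omega -> R.
Hypothesis HP : model Vd P.

Lemma P_ge0 w : 0 <= P w. Proof. by case: HP. Qed.
Lemma P_tot : \sum_w P w = 1. Proof. by case: HP. Qed.
Lemma P_ex : exchangeable P. Proof. by case: HP. Qed.
Lemma P_ia : info_a P. Proof. by case: HP. Qed.

Lemma lam_j j : Pr P [pred w : Omega | w.2 j != s0] = lambda P.
Proof.
rewrite /lambda !PrE [RHS](@exch_sum P (tperm ord0 j) _ P_ex).
by apply: eq_bigr => w _; rewrite /pw /= ffunE tpermL.
Qed.

Lemma unin_prob i : Pr P [pred w : Omega | w.2 i == s0] = 1 - lambda P.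
Proof.
rewrite -(lam_j i) !PrE; apply/eqP; rewrite eq_sym subr_eq -big_split /=.
rewrite -{1}P_tot; apply/eqP; apply: eq_bigr => w _.
by case: eqP => _; rewrite /= ?mulr1 ?mulr0 ?addr0 ?add0r.
Qed.

Lemma info_step v s i : s i = s0 ->
  P (v, s) = (\sum_k P (v, upd s i k)) * (1 - lambda P).
Proof.
move=> si; rewrite {1}(@P_ia i (v, s) si) unin_prob; congr (_ * _).
rewrite /Pr (reindex_onto (fun k => (v, upd s i k)) (fun w : Omega => w.2 i)).
  apply: eq_big => [k|k _] //=; rewrite eqxx /= ffunE eqxx eqxx andbT.
  by apply/forallP => j; apply/implyP => /negbTE nji; rewrite ffunE nji.
case=> v' s' /= /andP[/eqP -> /forallP H]; congr pair; apply/ffunP => j.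
rewrite ffunE; case: eqP => [->//|/eqP nji].
by have /implyP/(_ nji)/eqP := H j.
Qed.


Lemma upd_s0 s i : s i = s0 -> upd s i s0 = s.
Proof. by move=> si; apply/ffunP => j; rewrite ffunE; case: eqP => // ->. Qed.

Lemma info_step2 v s i : s i = s0 ->
  lambda P * P (v, s) = (1 - lambda P) * \sum_(k | k != s0) P (v, upd s i k).
Proof.
move=> si; have := info_step v si; rewrite (bigD1 s0) //= upd_s0 // => E.
set X := \sum_(k | _) _ in E *; set l := lambda P in E *; set p := P (v, s) in E *.
apply/eqP; rewrite -subr_eq0; apply/eqP.
have -> : l * p - (1 - l) * X = p - (p + X) * (1 - l) by ring.
by rewrite -E subrr.
Qed.


Lemma stepC v u : forall s, #|~: informed s| = u ->
  P (v, s) * lambda P ^+ u = (1 - lambda P) ^+ u * \sum_(s' | Cset s s') P (v, s').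
Proof.
elim: u => [|u IH] s Hu.
  by rewrite !expr0 mulr1 mul1r (eq_bigl _ _ (Cset_full Hu)) big_pred1_eq.
have [i Hi] : exists i, i \in ~: informed s by apply/set0Pn; rewrite -card_gt0 Hu.
have si : s i = s0 by move: Hi; rewrite !inE negbK => /eqP.
rewrite exprS mulrA (mulrC (P _)) (info_step2 v si) -mulrA mulr_suml.
rewrite (Cset_part _ si) exprS -mulrA; congr (_ * _); rewrite mulr_sumr.
apply: eq_bigr => k nk; rewrite IH //.
by have := cardsD1 i (~: informed s); rewrite Hi inf_upd // Hu add1n => -[].
Qed.


Lemma Pr_allinf : Pr P AI = lambda P ^+ nv.
Proof.
rewrite -[RHS]mulr1 -P_tot mulr_sumr sum_pair PrE sum_pair.
apply: eq_bigr => v _.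
have -> : \sum_s lambda P ^+ nv * P (v, s) =
          \sum_s wt (lambda P) (informed s) * \sum_(s' | Cset s s') P (v, s').
  apply: eq_bigr => s _; rewrite wtE nv_sub (exp_split _ s) -mulrA mulrCA.
  by rewrite mulrCA (mulrC _ (P _)) stepC // mulrA.
rewrite swapC; apply: eq_bigr => s' _; by rewrite sum_Cset_wt.
Qed.


Lemma PI_Cset s s' v : Cset s s' -> PI P (v, s') = P (v, s') / lambda P ^+ nv.
Proof. by move=> /Cset_allinf A; rewrite /PI Pr_allinf; have -> : AI (v, s') by []. Qed.

Lemma claim1w (lpos : 0 < lambda P) v s :
  P (v, s) = wt (lambda P) (informed s) * \sum_(s' | Cset s s') PI P (v, s').
Proof.
rewrite (eq_bigr (fun s' => P (v, s') / lambda P ^+ nv)); last by move=> s' /PI_Cset ->.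
rewrite -mulr_suml wtE nv_sub (exp_split _ s).
have S := stepC v (erefl #|~: informed s|).
set X := \sum_(s' | _) _ in S *; set la := lambda P ^+ #|informed s| in S *.
set lb := lambda P ^+ #|~: informed s| in S *; set p := P (v, s) in S *.
have la0 : la != 0 by rewrite expf_neq0 // lt0r_neq0.
have lb0 : lb != 0 by rewrite expf_neq0 // lt0r_neq0.
rewrite mulrA -(mulrA la) -S; field.
by rewrite la0 lb0.
Qed.


Lemma decomp (lpos : 0 < lambda P) (F : Omega -> R) :
  \sum_w P w * F w = \sum_w PI P w * \sum_I wt (lambda P) I * F (w.1, rst w.2 I).
Proof.
rewrite sum_pair [RHS]sum_pair; apply: eq_bigr => v _.
rewrite (eq_bigr (fun s => (wt (lambda P) (informed s) * F (v, s)) *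
                           \sum_(s' | Cset s s') PI P (v, s'))); last first.
  by move=> s _; rewrite {1}claim1w // mulrAC.
rewrite (swapC (fun s => wt (lambda P) (informed s) * F (v, s)) (fun s' => PI P (v, s'))).
apply: eq_bigr => s' _ /=.
case: (boolP [forall j, s' j != s0]) => A.
  by rewrite sum_Cset //; congr (_ * _); apply: eq_bigr => I _; rewrite informed_rst.
rewrite /PI; have -> : AI (v, s') = false by apply/negbTE. by rewrite !mul0r.
Qed.


Lemma sum_PI (lpos : 0 < lambda P) : \sum_w PI P w = 1.
Proof.
have := decomp lpos (fun _ => 1); under eq_bigr do rewrite mulr1.
rewrite P_tot => ->; apply: eq_bigr => w _.
by under eq_bigr do rewrite mulr1; rewrite sum_wt mulr1.
Qed.

Lemma PI_const (lpos : 0 < lambda P) (F : Omega -> R) (c : R) :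
  (forall w, AI w -> \sum_I wt (lambda P) I * F (w.1, rst w.2 I) = c) ->
  \sum_w P w * F w = c.
Proof.
move=> H; rewrite decomp // -[RHS]mul1r -(sum_PI lpos) mulr_suml.
apply: eq_bigr => w _; case: (boolP (AI w)) => A; first by rewrite H.
by rewrite /PI (negbTE A) !mul0r.
Qed.

Lemma lam_ge0 : 0 <= lambda P.
Proof. by rewrite /lambda /Pr sumr_ge0 // => w _; apply: P_ge0. Qed.

Lemma P_le_Pr (E : pred Omega) w : E w -> P w <= Pr P E.
Proof.
move=> Ew; rewrite /Pr (bigD1 w) //= lerDl sumr_ge0 // => *; exact: P_ge0.
Qed.

Lemma lam0_sum (F : Omega -> R) (c : R) : lambda P = 0 ->
  (forall w, [forall j, w.2 j == s0] -> F w = c) -> \sum_w P w * F w = c.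
Proof.
move=> l0 H; rewrite -[RHS]mul1r -P_tot mulr_suml; apply: eq_bigr => w _.
case: (boolP [forall j, w.2 j == s0]) => A; first by rewrite H.
have [j Hj] : exists j, w.2 j != s0.
  by move/forallPn: A => [j Hj]; exists j.
have : P w <= 0 by rewrite -l0 -(lam_j j); apply: P_le_Pr.
move=> Pw; have -> : P w = 0 by apply/eqP; rewrite eq_le Pw P_ge0.
by rewrite !mul0r.
Qed.

Lemma probM_val i m : probM P i m =
  if lambda P == 0 then (0 == m)%:R else
  (\sum_I wt (lambda P) I * ((#|I :\ i| == m) && (i \notin I))%:R) /
  (\sum_I wt (lambda P) I * (i \notin I)%:R).
Proof.
rewrite /probM !PrE; case: eqP => [l0|ln0].
  rewrite (lam0_sum (c := (0 == m)%:R) l0); last first.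
    move=> w /forallP A; rewrite /= (eqP (A i)) eqxx andbT; congr (_%:R).
    congr (_ == m); apply/eqP; rewrite cards_eq0; apply/eqP/setP => j.
    by rewrite !inE (A j) andbF.
  rewrite (lam0_sum (c := 1) l0) ?divr1 // => w /forallP A.
  by rewrite /Si0 /= (eqP (A i)) eqxx.
have lpos : 0 < lambda P by rewrite lt_def lam_ge0 andbT; apply/eqP.
congr (_ / _); apply: PI_const => // -[v s'] /= A; apply: eq_bigr => I _.
  by rewrite Mcnt_rst // rst_eq_s0.
by rewrite /Si0 /= rst_eq_s0.
Qed.


Lemma condE_ind X (E : pred Omega) :
  condE P X E = (\sum_w P w * ((E w)%:R * X w)) / Pr P E.
Proof.
rewrite /condE big_mkcond; congr (_ / _); apply: eq_bigr => w _.
by case: (E w); rewrite ?mul1r ?mul0r ?mulr0.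
Qed.

Lemma condE_perm (pi : {perm voter}) (j : voter) (k : Sig) :
  condE P (Vdi Vd j) [pred w : Omega | w.2 j == k] =
  condE P (Vdi Vd (pi j)) [pred w : Omega | w.2 (pi j) == k].
Proof.
rewrite !condE_ind !PrE (@exch_sum P pi _ P_ex) [in X in _ / X](@exch_sum P pi _ P_ex).
by rewrite /pw /Vdi /=; congr (_ / _); apply: eq_bigr => w _; rewrite !ffunE.
Qed.

Lemma good_perm (pi : {perm voter}) j k : good Vd P (pi j) k = good Vd P j k.
Proof. by rewrite /good (condE_perm pi j). Qed.

Lemma perm_neq (pi : {perm voter}) i j : pi i = i -> (pi j != i) = (j != i).
Proof. by move=> pii; rewrite -{1}pii (inj_eq (@perm_inj _ pi)). Qed.

Lemma Gcnt_pw (pi : {perm voter}) i w : pi i = i -> Gcnt Vd P i (pw pi w) = Gcnt Vd P i w.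
Proof.
move=> pii; rewrite /Gcnt -[in RHS](card_preimset _ (@perm_inj _ pi)); apply: eq_card => j.
by rewrite !inE /pw /= ffunE perm_neq // good_perm.
Qed.

Lemma Mcnt_pw (pi : {perm voter}) i w : pi i = i -> Mcnt i (pw pi w) = Mcnt i w.
Proof.
move=> pii; rewrite /Mcnt -[in RHS](card_preimset _ (@perm_inj _ pi)); apply: eq_card => j.
by rewrite !inE /pw /= ffunE perm_neq.
Qed.

Lemma Uo_pw (pi : {perm voter}) i w : pi i = i -> unin_others i (pw pi w) = pi @^-1: unin_others i w.
Proof.
by move=> pii; apply/setP => j; rewrite !inE /pw /= ffunE perm_neq.
Qed.

Lemma Ev_pw (pi : {perm voter}) i g m w : pi i = i -> Ev Vd P i g m (pw pi w) = Ev Vd P i g m w.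
Proof. by move=> pii; rewrite /Ev /= Gcnt_pw // Mcnt_pw // /pw /= ffunE pii. Qed.

Definition Qf i g m (A : {set voter}) : R :=
  \sum_w P w * ((Ev Vd P i g m w) && (unin_others i w == A))%:R.

Lemma Q_swap i g m a b A : a != i -> b != i -> Qf i g m A = Qf i g m (tperm a b @^-1: A).
Proof.
move=> ai bi; have ti : tperm a b i = i by rewrite tpermD // eq_sym.
rewrite /Qf (@exch_sum P (tperm a b) _ P_ex); apply: eq_bigr => w _.
rewrite Ev_pw // Uo_pw //; congr (_ * (_ && _)%:R).
by apply/eqP/eqP => E; [rewrite -E | rewrite E]; apply/setP => x; rewrite !inE tpermK.
Qed.


Lemma Q_zero i g m A : ~~ cls i m A -> Qf i g m A = 0.
Proof.
move=> nc; rewrite /Qf big1 // => w _.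
case: (boolP (Ev Vd P i g m w && (unin_others i w == A))); rewrite ?mulr0 //.
case/andP => /andP[/andP[_ /eqP Mm] _] /eqP UA; move: nc; rewrite /cls -UA !inE eqxx /=.
by rewrite (card_Uo_m Mm) eqxx.
Qed.

Lemma Q_cls i g m : 0 < Pr P (Ev Vd P i g m) ->
  exists A0, cls i m A0 /\ forall A, Qf i g m A = (cls i m A)%:R * Qf i g m A0.
Proof.
move=> Hpos; case: (pickP (Ev Vd P i g m)) => [w Ew|none]; last first.
  by move: Hpos; rewrite /Pr big_pred0 // ltxx.
have cA0 : cls i m (unin_others i w).
  move: Ew => /andP[/andP[_ /eqP Mm] _]; rewrite /cls !inE eqxx /=.
  by rewrite (card_Uo_m Mm) eqxx.
exists (unin_others i w); split => // A.
case: (boolP (cls i m A)) => cA; last by rewrite Q_zero // mul0r.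
rewrite mul1r; apply: (swap_trans (i := i)).
- by move=> a b B ai bi; apply: Q_swap.
- by case/andP: cA.
- by case/andP: cA0.
- by case/andP: cA => _ /eqP ->; case/andP: cA0 => _ /eqP ->.
Qed.

Lemma sum_Q i g m (F : {set voter} -> R) :
  \sum_w P w * ((Ev Vd P i g m w)%:R * F (unin_others i w)) = \sum_A F A * Qf i g m A.
Proof.
rewrite /Qf; under [RHS]eq_bigr do rewrite mulr_sumr.
rewrite exchange_big; apply: eq_bigr => w _.
rewrite (bigD1 (unin_others i w)) //= eqxx andbT big1 ?addr0; first by rewrite [RHS]mulrC mulrA.
by move=> A nA; rewrite eq_sym (negbTE nA) andbF mulr0 mulr0.
Qed.

Lemma p_piv_val sigma i g m : 0 < Pr P (Ev Vd P i g m) ->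
  p_piv Vd P sigma i g m =
  (\sum_(A | cls i m A) fpiv sigma g A) / (\sum_(A | cls i m A) (1 : R)).
Proof.
move=> Hpos; have [A0 [cA0 HQ]] := Q_cls Hpos.
have E1 : \sum_(w | Ev Vd P i g m w) P w * pivprob Vd P sigma i w =
          \sum_w P w * ((Ev Vd P i g m w)%:R * fpiv sigma g (unin_others i w)).
  rewrite big_mkcond; apply: eq_bigr => w _.
  case: (boolP (Ev Vd P i g m w)) => Ew; rewrite ?mul0r ?mulr0 // mul1r.
  by case/andP: Ew => /andP[/eqP Gg _] _; rewrite /pivprob Gg.
have E2 : Pr P (Ev Vd P i g m) = \sum_A 1 * Qf i g m A.
  by rewrite PrE -(sum_Q i g m (fun _ => 1)); apply: eq_bigr => w _; rewrite mulr1.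
have HS (F : {set voter} -> R) :
    \sum_A F A * Qf i g m A = Qf i g m A0 * \sum_(A | cls i m A) F A.
  by under eq_bigr do rewrite HQ; rewrite sum_cls.
rewrite /p_piv E1 sum_Q E2 !HS.
have q0 : Qf i g m A0 != 0.
  apply/eqP => q0; move: Hpos; rewrite E2 HS q0 mul0r.
  by rewrite ltxx.
by rewrite invfM mulrACA mulfV // mul1r.
Qed.


Lemma decomp_fact (lpos : 0 < lambda P) (F G : Omega -> R) c :
  (forall w, AI w -> \sum_I wt (lambda P) I * F (w.1, rst w.2 I) = c * G w) ->
  \sum_w P w * F w = c * \sum_w PI P w * G w.
Proof.
move=> H; rewrite decomp // mulr_sumr; apply: eq_bigr => w _.
case: (boolP (AI w)) => A; first by rewrite H // mulrCA.
by rewrite /PI (negbTE A) !mul0r mulr0.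
Qed.

Lemma good_s0 j : good Vd P j s0 = false.
Proof. by rewrite /good eqxx. Qed.

Lemma cj_pos j : 0 < lambda P -> lambda P <= 1 ->
  0 < \sum_I wt (lambda P) I * (j \in I)%:R.
Proof.
move=> l0 l1; rewrite (bigD1 setT) //= inE mulr1; apply: ltr_wpDr; last first.
  rewrite wtE cardsT card_ord subnn expr0 mulr1; exact: exprn_gt0.
by apply: sumr_ge0 => I _; apply: mulr_ge0; [apply: wt_ge0; rewrite (ltW l0) | apply: ler0n].
Qed.

Lemma condE_PI j k : 0 < lambda P -> lambda P <= 1 -> k != s0 ->
  condE P (Vdi Vd j) [pred w : Omega | w.2 j == k] =
  (\sum_w PI P w * ((w.2 j == k)%:R * Vd (w.1 j))) / (\sum_w PI P w * (w.2 j == k)%:R).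
Proof.
move=> l0 l1 nk; rewrite condE_ind PrE.
set c := \sum_I wt (lambda P) I * (j \in I)%:R.
rewrite (@decomp_fact l0 _ (fun w => (w.2 j == k)%:R * Vd (w.1 j)) c); last first.
  move=> w _ /=; rewrite /c mulr_suml; apply: eq_bigr => I _.
  by rewrite rst_k // !mulrA.
rewrite (@decomp_fact l0 _ (fun w => (w.2 j == k)%:R) c); last first.
  move=> w _ /=; rewrite /c mulr_suml; apply: eq_bigr => I _.
  by rewrite rst_k // !mulrA.
by rewrite ratio_cancel // lt0r_neq0 // cj_pos.
Qed.

Lemma Gcnt_rst i v s' I : Gcnt Vd P i (v, rst s' I) = Gs (good Vd P) (I :\ i) s'.
Proof.
apply: eq_card => j; rewrite !inE /= ffunE.
by case: (j \in I); rewrite ?good_s0 ?andbF ?andbT.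
Qed.

Lemma Zf_val i g m : 0 < lambda P < 1 -> Zf Vd P i g m = Zval (PI P) (good Vd P) i g m.
Proof.
case/andP=> l0 l1; have l01 : 0 < lambda P < 1 by rewrite l0 l1.
rewrite /Zf /Zval /SI condE_ind !PrE.
set cm := wtm (lambda P) m + wtm (lambda P) m.+1.
have cm0 : cm != 0 by rewrite lt0r_neq0 // addr_gt0 // wtm_gt0.
have wm0 : wtm (lambda P) m != 0 by rewrite lt0r_neq0 // wtm_gt0.
rewrite (@decomp_fact l0 _ (fun w => \sum_(I : {set voter} | (i \notin I) && (#|I| == m))
    (Gs (good Vd P) I w.2 == g)%:R) cm); last first.
  move=> [v s'] A /=; rewrite -(cnt1 _ _ _ (fun J => (Gs (good Vd P) J s' == g)%:R)).
  apply: eq_bigr => I _; rewrite Gcnt_rst Mcnt_rst // natr_and. by rewrite [in LHS](mulrC (_%:R)).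
rewrite [X in _ / X](@decomp_fact l0 _ (fun w => \sum_(I : {set voter} | (i \notin I) && (#|I| == m))
    1) cm); last first.
  move=> [v s'] A /=; rewrite -(cnt1 _ _ _ (fun J => 1)).
  by apply: eq_bigr => I _; rewrite Mcnt_rst // mulr1.
rewrite ratio_cancel //; congr (_ * _).
rewrite (@decomp_fact l0 _ (fun w => \sum_(I : {set voter} | (i \notin I) && (#|I| == m))
    ((Gs (good Vd P) I w.2 == g)%:R * Vd (w.1 i))) (wtm (lambda P) m)); last first.
  move=> [v s'] A /=; rewrite -(cnt2 _ _ _ (fun J => (Gs (good Vd P) J s' == g)%:R * Vd (v i))).
  apply: eq_bigr => I _; rewrite /Ev /Vdi /= Gcnt_rst Mcnt_rst // rst_eq_s0 // !natr_and. by ring.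
rewrite [X in _ / X](@decomp_fact l0 _ (fun w => \sum_(I : {set voter} | (i \notin I) && (#|I| == m))
    (Gs (good Vd P) I w.2 == g)%:R) (wtm (lambda P) m)); last first.
  move=> [v s'] A /=; rewrite -(cnt2 _ _ _ (fun J => (Gs (good Vd P) J s' == g)%:R)).
  apply: eq_bigr => I _; rewrite /Ev /= Gcnt_rst Mcnt_rst // rst_eq_s0 // !natr_and; ring.
by rewrite ratio_cancel.
Qed.

End Model.

Lemma good_eq P P' : model Vd P -> model Vd P' -> 0 < lambda P < 1 -> 0 < lambda P' < 1 ->
  PI P =1 PI P' -> forall j k, good Vd P j k = good Vd P' j k.
Proof.
move=> HP HP' /andP[l0 l1] /andP[l0' l1'] HPI j k.
case: (eqVneq k s0) => [->|nk]; first by rewrite !good_s0.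
rewrite /good (condE_PI HP) ?(ltW l1) // (condE_PI HP') ?(ltW l1') //.
by congr (_ && (0 < _ / _)); apply: eq_bigr => w _; rewrite HPI.
Qed.

End Proofs.

Theorem lemma1 (R : realFieldType) (tau : nat) (Vt : finType) (K : nat)
    (Vd : Vt -> R) :
  (forall P : {ffun 'I_(tau.*2.+1) -> Vt} * {ffun 'I_(tau.*2.+1) -> 'I_K.+1} -> R,
     model Vd P -> 0 < lambda P ->
     forall (v : {ffun 'I_(tau.*2.+1) -> Vt}) (s : {ffun 'I_(tau.*2.+1) -> 'I_K.+1}),
       P (v, s) = lambda P ^+ nM s * (1 - lambda P) ^+ (tau.*2.+1 - nM s)
                  * \sum_(s' | Cset s s') PI P (v, s'))
  /\
  (forall sigma : 'I_(tau.*2.+1) -> R, sigma_star sigma ->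
   forall (i : 'I_(tau.*2.+1)) (g m : nat), (g <= tau)%N -> (g <= m <= tau + g)%N ->
     (forall P P' : {ffun 'I_(tau.*2.+1) -> Vt} * {ffun 'I_(tau.*2.+1) -> 'I_K.+1} -> R,
        model Vd P -> model Vd P' -> lambda P = lambda P' ->
        0 < Pr P (Si0 i) -> 0 < Pr P' (Si0 i) ->
        probM P i m = probM P' i m)
     /\
     (forall P P' : {ffun 'I_(tau.*2.+1) -> Vt} * {ffun 'I_(tau.*2.+1) -> 'I_K.+1} -> R,
        model Vd P -> model Vd P' ->
        0 < Pr P (Ev Vd P i g m) -> 0 < Pr P' (Ev Vd P' i g m) ->
        p_piv Vd P sigma i g m = p_piv Vd P' sigma i g m)
     /\
     (forall P P' : {ffun 'I_(tau.*2.+1) -> Vt} * {ffun 'I_(tau.*2.+1) -> 'I_K.+1} -> R,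
        model Vd P -> model Vd P' ->
        0 < lambda P < 1 -> 0 < lambda P' < 1 ->
        PI P =1 PI P' ->
        Zf Vd P i g m = Zf Vd P' i g m)).
Proof.
split.
  by move=> P HP l0 v s; rewrite (claim1w HP l0) wtE.
move=> sigma _ i g m _ _; split; [|split].
- by move=> P P' HP HP' Heq _ _; rewrite (probM_val HP) (probM_val HP') Heq.
- by move=> P P' HP HP' h1 h2; rewrite (p_piv_val HP _ h1) (p_piv_val HP' _ h2).
move=> P P' HP HP' l1 l2 HPI; rewrite (Zf_val HP _ _ _ l1) (Zf_val HP' _ _ _ l2).
have E1 := functional_extensionality _ _ HPI.
have E2 : good Vd P = good Vd P'.
  by do 2 (apply: functional_extensionality => ?); apply: good_eq.
by rewrite E1 E2.
Qed.
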